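(* Assume properties (P.4), (P.5) and (P.6) hold. Let $N\in\mathbb N$ and let $\Omega\in\mathscr A$ be an $N$-admissible set with $\mathfrak m(\Omega)\in(0,+\infty)$. Then $\Omega$ has an $N$-Cheeger set, i.e. $\mathscr C_N(\Omega)\neq\emptyset$.
   Context: $(X,\mathscr A,\mathfrak m)$ is a non-negative $\sigma$-finite measure space. For $A,B\in\mathscr A$, ''$A\subset B$'' means $\mathfrak m(A\setminus B)=0$. $P\colon\mathscr A\to[0,+\infty]$ is a proper functional (i.e. $P(A)<+\infty$ for some $A\in\mathscr A$), called the perimeter. Convergence of sets in $L^1(X,\mathfrak m)$ means $L^1$ convergence of their characteristic functions. Properties: (P.4) $P$ is lower semicontinuous with respect to $L^1(X,\mathfrak m)$ convergence: if $\chi_{E_k}\to\chi_E$ in $L^1(X,\mathfrak m)$ then $P(E)\le\liminf_k P(E_k)$. (P.5) For every $c\ge0$, the set $\{\chi_E: E\in\mathscr A,\ P(E)\le c\}$ is compact in $L^1(X,\mathfrak m)$. (P.6) There is a function $f\colon(0,+\infty)\to(0,+\infty)$ with $\lim_{\varepsilon\to0^+}f(\varepsilon)=+\infty$ such that, whenever $\varepsilon>0$ and $E\in\mathscr A$ with $\mathfrak m(E)\le\varepsilon$, one has $P(E)\ge f(\varepsilon)\,\mathfrak m(E)$. Clusters: for $N\in\mathbb N$, an $N$-cluster is a family $\mathcal E=\{\mathcal E(i)\}_{i=1}^N\subset\mathscr A$ with $0<\mathfrak m(\mathcal E(i))<+\infty$ and $P(\mathcal E(i))<+\infty$ for all $i$,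 and $\mathfrak m(\mathcal E(i)\cap\mathcal E(j))=0$ for $i\neq j$. A set $\Omega\in\mathscr A$ is $N$-admissible if there is an $N$-cluster all of whose chambers are contained in $\Omega$. For $N$-admissible $\Omega$, the $N$-Cheeger constant is $h_N(\Omega)=\inf\{\sum_{i=1}^N P(\mathcal E(i))/\mathfrak m(\mathcal E(i)) : \mathcal E \text{ an } N\text{-cluster with all chambers contained in }\Omega\}$; an $N$-cluster in $\Omega$ attaining this infimum is an $N$-Cheeger set of $\Omega$, and $\mathscr C_N(\Omega)$ denotes the collection of all of them. *)

(* Defs.v *)
From HB Require Import structures.
From mathcomp Require Import all_boot all_order all_algebra.
From mathcomp Require Import all_classical all_reals all_analysis.
Set Implicit Arguments. Unset Strict Implicit. Unset Printing Implicit Defensive.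
Import Order.TTheory GRing.Theory Num.Theory.
Import numFieldNormedType.Exports.
Local Open Scope classical_set_scope.
Local Open Scope ring_scope.

Section Defs.
Context (d : measure_display) (T : measurableType d) (R : realType).
Variables (mu : {measure set T -> \bar R}) (P : set T -> \bar R).

Definition msubset (A B : set T) : Prop := mu (A `\` B) = 0%E.

(* chi_{Ek} -> chi_E in L^1(X, mu):  int |chi_{Ek} - chi_E| dmu = mu (Ek Δ E) -> 0 *)
Definition L1_cvg (Ek : nat -> set T) (E : set T) : Prop :=
  (fun k => mu ((Ek k `\` E) `|` (E `\` Ek k))) @ \oo --> 0%E.

Definition perimeter_functional : Prop :=
  (forall A, measurable A -> (0 <= P A)%E) /\
  (exists A, measurable A /\ (P A < +oo)%E).

Definition P4 : Prop :=
  forall (Ek : nat -> set T) (E : set T),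
    (forall k, measurable (Ek k)) -> measurable E ->
    L1_cvg Ek E -> (P E <= limn_einf (fun k => P (Ek k)))%E.

Definition P5 : Prop :=
  forall c : R, 0 <= c ->
  forall Ek : nat -> set T,
    (forall k, measurable (Ek k) /\ (P (Ek k) <= c%:E)%E) ->
    exists phi : nat -> nat, (forall n, (phi n < phi n.+1)%N) /\
      exists E : set T, [/\ measurable E, (P E <= c%:E)%E &
                            L1_cvg (fun k => Ek (phi k)) E].

Definition P6 : Prop :=
  exists f : R -> R,
    [/\ (forall e, 0 < e -> 0 < f e),
        f x @[x --> 0^'+] --> +oo &
        forall (e : R) (E : set T), 0 < e -> measurable E ->
          (mu E <= e%:E)%E -> ((f e)%:E * mu E <= P E)%E].

Definition is_cluster (N : nat) (E : 'I_N -> set T) : Prop :=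
  (forall i, [/\ measurable (E i), (0 < mu (E i))%E, (mu (E i) < +oo)%E &
                 (P (E i) < +oo)%E]) /\
  (forall i j, i != j -> mu (E i `&` E j) = 0%E).

Definition cluster_in (N : nat) (Omega : set T) (E : 'I_N -> set T) : Prop :=
  is_cluster E /\ forall i, msubset (E i) Omega.

Definition admissible (N : nat) (Omega : set T) : Prop :=
  exists E : 'I_N -> set T, cluster_in Omega E.

(* sum_i P(E(i)) / m(E(i)); all quantities are finite for clusters *)
Definition cheeger_ratio (N : nat) (E : 'I_N -> set T) : R :=
  \sum_(i < N) (fine (P (E i)) / fine (mu (E i))).

Definition cheeger_constant (N : nat) (Omega : set T) : \bar R :=
  ereal_inf [set (cheeger_ratio E)%:E | E in [set E : 'I_N -> set T | cluster_in Omega E]].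

Definition cheeger_sets (N : nat) (Omega : set T) : set ('I_N -> set T) :=
  [set E | cluster_in Omega E /\ (cheeger_ratio E)%:E = cheeger_constant N Omega].

End Defs.
Arguments admissible {d T R} mu P N Omega.
Arguments cheeger_sets {d T R} mu P N Omega.
Arguments cheeger_constant {d T R} mu P N Omega.

(* Main.v *)
Require Import Defs.
From HB Require Import structures.
From mathcomp Require Import all_boot all_order all_algebra.
From mathcomp Require Import all_classical all_reals all_analysis.
From mathcomp Require Import ring lra.
Import Order.TTheory GRing.Theory Num.Theory.
Import numFieldNormedType.Exports.
Local Open Scope classical_set_scope.
Local Open Scope ring_scope.
Lemma lt_limn_einf (R : realType) (u : (\bar R)^nat) x :
  (x < limn_einf u)%E -> exists n, forall k, (n <= k)%N -> (x < u k)%E.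
Proof.
rewrite limn_einf_lim; have -> : limn (einfs u) = ereal_sup (range (einfs u)).
  by apply/cvg_lim => //; exact: cvg_einfs_sup.
move=> /ereal_sup_gt [_ [n _ <-] xl].
exists n => k nk; apply: (lt_le_trans xl); apply: ereal_inf_lbound; by exists k.
Qed.
Lemma ev_lt0 (R : realType) (u : (\bar R)^nat) (e : R) :
  u @ \oo --> 0%E -> 0 < e -> \forall k \near \oo, (u k < e%:E)%E.
Proof.
move=> /fine_cvgP [uf uc] e0.
have := @cvgr_lt R _ _ _ _ _ uc _ e0.
move=> H; near=> k.
have /fineK <- : u k \is a fin_num by near: k.
rewrite lte_fin; near: k; exact: H.
Unshelve. all: by end_near. Qed.
Lemma subseq_cvg (R : realType) (u : (\bar R)^nat) (l : \bar R) (phi : nat -> nat) :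
  (forall n, (phi n < phi n.+1)%N) -> u @ \oo --> l -> (u \o phi) @ \oo --> l.
Proof.
move=> inc ul.
have ge : forall n, (n <= phi n)%N.
  elim=> // n IH; exact: (leq_ltn_trans IH (inc n)).
apply: cvg_comp ul => A [n _ An]; exists n => // k /= nk.
apply: An; exact: leq_trans nk (ge k).
Qed.

Lemma extract (d : measure_display) (T : measurableType d) (R : realType)
  (mu : {measure set T -> \bar R}) (P : set T -> \bar R) (hP5 : P5 mu P)
  (N : nat) (G : nat -> 'I_N -> set T) (c : R) : 0 <= c ->
  (forall k i, measurable (G k i) /\ (P (G k i) <= c%:E)%E) ->
  exists phi : nat -> nat, (forall n, (phi n < phi n.+1)%N) /\
    exists E : 'I_N -> set T, forall i, [/\ measurable (E i), (P (E i) <= c%:E)%E &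
      L1_cvg mu (fun k => G (phi k) i) (E i)].
Proof.
move=> c0 hG.
suff: forall n, exists phi : nat -> nat, (forall n, (phi n < phi n.+1)%N) /\
    exists E : 'I_N -> set T, forall i : 'I_N, (i < n)%N -> [/\ measurable (E i), (P (E i) <= c%:E)%E &
      L1_cvg mu (fun k => G (phi k) i) (E i)].
  move=> /(_ N) [phi [inc [E HE]]]; exists phi; split => //; exists E => i.
  exact: HE.
elim=> [|n [phi [inc [E HE]]]].
  by exists id; split => //; exists (fun=> set0).
case: (ltnP n N) => nN; last first.
  exists phi; split => //; exists E => i _; apply: HE.
  exact: leq_trans (ltn_ord i) nN.
pose i0 : 'I_N := Ordinal nN.
have [psi [incpsi [G0 [mG0 PG0 cG0]]]] := hP5 _ c0 (fun k => G (phi k) i0)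
  (fun k => hG (phi k) i0).
have phimono := homo_ltn ltn_trans inc.
exists (phi \o psi); split.
  by move=> m /=; apply: phimono.
exists (fun i => if i == i0 then G0 else E i) => i.
rewrite ltnS leq_eqVlt => /orP [/eqP iN|iN].
  have -> : i = i0 by apply: val_inj.
  by rewrite eqxx.
have -> : (i == i0) = false.
  by apply/negbTE; apply/eqP => ii0; move: iN; rewrite ii0 ltnn.
have [? ? cv] := HE i iN; split => //.
move: (@subseq_cvg R _ _ psi incpsi cv); rewrite /L1_cvg /comp /=; exact.
Qed.
Lemma term_le (R : realFieldType) (Pi mi p m dl : R) :
  0 <= Pi -> 0 < mi -> 0 < dl -> 0 <= p -> 0 < m ->
  Pi - dl <= p -> m <= mi + dl ->
  Pi / mi - dl * ((Pi + mi) / mi ^+ 2) <= p / m.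
Proof.
move=> P0 m0 d0 p0 mp hp hm.
have md : 0 < mi + dl by lra.
have step1 : Pi / mi - dl * ((Pi + mi) / mi ^+ 2) <= (Pi - dl) / (mi + dl).
  have -> : Pi / mi - dl * ((Pi + mi) / mi ^+ 2) = (Pi * mi - dl * (Pi + mi)) / mi ^+ 2.
    by field; rewrite gt_eqF.
  rewrite ler_pdivrMr ?exprn_gt0 // mulrAC ler_pdivlMr //.
  nra.
apply: (le_trans step1).
case: (lerP (Pi - dl) 0) => h.
  apply: (le_trans (y := 0)); last exact: divr_ge0 (ltW mp).
  by rewrite pmulr_lle0 ?invr_gt0.
rewrite ler_pdivrMr // mulrAC ler_pdivlMr //.
nra.
Qed.

Section aux.
Context (d : measure_display) (T : measurableType d) (R : realType).
Variables (mu : {measure set T -> \bar R}).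

Lemma small0 (x : \bar R) : (0 <= x)%E -> (forall e : R, 0 < e -> (x < e%:E)%E) -> x = 0%E.
Proof.
move=> x0 H; apply/eqP; rewrite eq_le x0 andbT.
case: x x0 H => [r| |] //= r0 H.
- rewrite lee_fin; apply/ler_addgt0Pr => e e0; rewrite add0r.
  by have := H e e0; rewrite lte_fin => /ltW.
- by have := H 1 ltr01.
Qed.

Lemma msub_le (A O : set T) : measurable A -> measurable O ->
  msubset mu A O -> (mu A <= mu O)%E.
Proof.
move=> mA mO h; rewrite (measureDI mu mA mO); have h' : (mu : {content set T -> \bar R}) (A `\` O) = 0%E := h.
rewrite h' add0e.
by apply: le_measure; rewrite ?inE //; exact: measurableI.
Qed.

Lemma mu_sub (A B : set T) : measurable A -> measurable B -> A `<=` B -> (mu A <= mu B)%E.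
Proof. by move=> mA mB AB; apply: le_measure; rewrite ?inE. Qed.

Lemma mu_U2 (A B : set T) : measurable A -> measurable B -> (mu (A `|` B) <= mu A + mu B)%E.
Proof. by move=> mA mB; exact: measureU2. Qed.

Lemma mu_DI (A B : set T) : measurable A -> measurable B -> mu A = (mu (A `\` B) + mu (A `&` B))%E.
Proof. by move=> mA mB; exact: measureDI. Qed.

Lemma mu_ge0 (A : set T) : (0 <= mu A)%E.
Proof. exact: measure_ge0. Qed.

Lemma L1_near (Ek : nat -> set T) (E : set T) : (forall k, measurable (Ek k)) ->
  measurable E -> L1_cvg mu Ek E -> forall dl : R, 0 < dl ->
  \forall k \near \oo, (mu (Ek k `\` E) < dl%:E)%E /\ (mu (E `\` Ek k) < dl%:E)%E.
Proof.
move=> mEk mE cv dl dl0; have := @ev_lt0 R _ dl cv dl0; apply: filterS => k hk.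
have mU : measurable ((Ek k `\` E) `|` (E `\` Ek k)).
  by apply: measurableU; apply: measurableD.
split; apply: le_lt_trans hk; apply: mu_sub => //; try exact: measurableD.
all: by move=> x hx; [left | right].
Qed.
End aux.

Theorem theorem3p1 (d : measure_display) (T : measurableType d) (R : realType)
  (mu : {measure set T -> \bar R}) (P : set T -> \bar R)
  (hsigma : sigma_finite setT mu)
  (hP : perimeter_functional P)
  (hP4 : P4 mu P) (hP5 : P5 mu P) (hP6 : P6 mu P)
  (N : nat) (Omega : set T) (hOm : measurable Omega)
  (hadm : admissible mu P N Omega)
  (hpos : (0 < mu Omega)%E) (hfin : (mu Omega < +oo)%E) :
  cheeger_sets mu P N Omega !=set0.
Proof.
have P0 : forall A, measurable A -> (0 <= P A)%E by case: hP.
have finP : forall A : set T, measurable A -> (P A < +oo)%E -> P A = (fine (P A))%:E.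
  by move=> A mA hA; rewrite fineK // ge0_fin_numE // P0.
have finM : forall A : set T, measurable A -> (mu A < +oo)%E -> mu A = (fine (mu A))%:E.
  by move=> A mA hA; rewrite fineK // ge0_fin_numE.
have term_ge0 : forall E : 'I_N -> set T, is_cluster mu P E -> forall i,
    0 <= fine (P (E i)) / fine (mu (E i)).
  move=> E [hE _] i; have [mE _ _ _] := hE i.
  by apply: divr_ge0; apply: fine_ge0 => //; apply: P0.
have term_leR : forall E : 'I_N -> set T, is_cluster mu P E -> forall i,
    fine (P (E i)) / fine (mu (E i)) <= cheeger_ratio mu P E.
  move=> E cE i; rewrite /cheeger_ratio (bigD1 i) //= lerDl.
  by apply: sumr_ge0 => j _; apply: term_ge0.
have ratio_ge0 : forall E : 'I_N -> set T, is_cluster mu P E -> 0 <= cheeger_ratio mu P E.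
  by move=> E cE; apply: sumr_ge0 => j _; apply: term_ge0.
set h := cheeger_constant mu P N Omega.
have h0 : (0 <= h)%E.
  apply: le_ereal_inf_tmp => _ [E [cE _] <-]; rewrite lee_fin; exact: ratio_ge0.
have hfin' : (h < +oo)%E.
  case: hadm => E0 cE0; apply: (le_lt_trans (y := (cheeger_ratio mu P E0)%:E)).
    by rewrite /h /cheeger_constant; apply: (@ereal_inf_lbound R); exists E0.
  by rewrite ltry.
set hr := fine h.
have hE : h = hr%:E by rewrite /hr fineK // ge0_fin_numE.
have hr0 : 0 <= hr by rewrite -lee_fin -hE.
have hinf : forall F : 'I_N -> set T, cluster_in mu P Omega F -> hr <= cheeger_ratio mu P F.
  by move=> F cF; rewrite -lee_fin -hE /h /cheeger_constant; apply: (@ereal_inf_lbound R); exists F.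
have : forall k : nat, exists C : 'I_N -> set T, cluster_in mu P Omega C /\
    cheeger_ratio mu P C < hr + (k.+1%:R)^-1.
  move=> k; have : (h < (hr + (k.+1%:R)^-1)%:E)%E.
    by rewrite hE lte_fin ltrDl invr_gt0 ltr0n.
  by move=> /ereal_inf_lt [_ [C cC <-]]; rewrite lte_fin => hC; exists C.
move=> /choice [C hC].
have cC : forall k, cluster_in mu P Omega (C k) by move=> k; case: (hC k).
have Cm : forall k i, measurable (C k i) by move=> k i; case: (cC k) => [[+ _] _] => /(_ i) [].
have Cmu0 : forall k i, (0 < mu (C k i))%E by move=> k i; case: (cC k) => [[+ _] _] => /(_ i) [].
have Cmuf : forall k i, (mu (C k i) < +oo)%E by move=> k i; case: (cC k) => [[+ _] _] => /(_ i) [].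
have CPf : forall k i, (P (C k i) < +oo)%E by move=> k i; case: (cC k) => [[+ _] _] => /(_ i) [].
have CO : forall k i, msubset mu (C k i) Omega by move=> k i; case: (cC k).
pose MO := fine (mu Omega).
have MOE : mu Omega = MO%:E by rewrite /MO fineK // ge0_fin_numE.
have MO0 : 0 <= MO by rewrite -lee_fin -MOE.
have mC0 : forall k i, 0 < fine (mu (C k i)).
  by move=> k i; apply: fine_gt0; rewrite Cmu0 Cmuf.
have mCO : forall k i, fine (mu (C k i)) <= MO.
  move=> k i; rewrite -lee_fin -MOE -finM //; exact: msub_le.
have pC0 : forall k i, 0 <= fine (P (C k i)) by move=> k i; apply: fine_ge0; apply: P0.
have pCle : forall k i, fine (P (C k i)) <= (hr + 1) * fine (mu (C k i)).
  move=> k i; rewrite -ler_pdivrMr //.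
  apply: (le_trans (term_leR _ (proj1 (cC k)) i)); apply: ltW.
  apply: (lt_le_trans (proj2 (hC k))); rewrite lerD2l invf_le1 ?ltr0n //.
  by rewrite ler1n.
pose c := (hr + 1) * MO.
have c0 : 0 <= c by apply: mulr_ge0 => //; lra.
have CPc : forall k i, measurable (C k i) /\ (P (C k i) <= c%:E)%E.
  move=> k i; split => //; rewrite finP // lee_fin.
  apply: (le_trans (pCle k i)); apply: ler_wpM2l; [lra | exact: mCO].
have [e [e0 emC]] : exists e : R, 0 < e /\ forall k i, e < fine (mu (C k i)).
  case: hP6 => f [fpos flim fbnd].
  have fev := (cvgryPgt _).1 flim (hr + 1).
  have [x [x0 fx]] : exists x : R, 0 < x /\ hr + 1 < f x.
    have : \forall x \near (0:R)^'+, 0 < x /\ hr + 1 < f x.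
      by apply: filterI; [exact: (@nbhs_right_gt R 0) | exact: fev].
    by move=> /filter_ex [x hx]; exists x.
  exists x; split => // k i; rewrite ltNge; apply/negP => hm.
  have := fbnd x (C k i) x0 (Cm k i).
  rewrite finM // lee_fin => /(_ hm).
  rewrite finP // -EFinM lee_fin => hfx.
  have := pCle k i; have := mC0 k i; nra.
have [phi [inc [L hL]]] := @extract d T R mu P hP5 N C c c0 CPc.
have phige : forall n, (n <= phi n)%N.
  by elim=> // n IH; exact: (leq_ltn_trans IH (inc n)).
have mL : forall i, measurable (L i) by move=> i; case: (hL i).
have PLc : forall i, (P (L i) <= c%:E)%E by move=> i; case: (hL i).
have nearL : forall i (dl : R), 0 < dl -> \forall k \near \oo,
    (mu (C (phi k) i `\` L i) < dl%:E)%E /\ (mu (L i `\` C (phi k) i) < dl%:E)%E.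
  move=> i dl dl0; case: (hL i) => _ _ cv.
  exact: (@L1_near d T R mu _ _ (fun k => Cm (phi k) i) (mL i) cv dl dl0).
have Lpos : forall i, (0 < mu (L i))%E.
  move=> i; rewrite lt_neqAle mu_ge0 andbT; apply/negP => /eqP L0.
  have [k [hk _]] := filter_ex (nearL i e e0).
  have := emC (phi k) i; rewrite -lte_fin -finM //.
  rewrite (@mu_DI d T R mu _ _ (Cm _ _) (mL i)).
  have -> : mu (C (phi k) i `&` L i) = 0%E.
    apply/eqP; rewrite eq_le mu_ge0 andbT L0.
    by apply: mu_sub; [exact: measurableI | exact: mL | move=> x []].
  by rewrite adde0 => /(lt_trans hk); rewrite ltxx.
have LO : forall i, msubset mu (L i) Omega.
  move=> i; apply: small0; first exact: mu_ge0.
  move=> dl dl0; have [k [_ hk]] := filter_ex (nearL i dl dl0).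
  set A := C (phi k) i.
  have mA : measurable A by exact: Cm.
  apply: (le_lt_trans (y := mu ((L i `\` A) `|` (A `\` Omega)))).
    apply: mu_sub; [exact: measurableD | apply: measurableU; exact: measurableD |].
    by move=> x [Lx Ox]; case: (pselect (A x)) => Ax; [right | left].
  apply: (le_lt_trans (@mu_U2 d T R mu _ _ (measurableD (mL i) mA) (measurableD mA hOm))).
  have := CO (phi k) i; rewrite /msubset -/A => ->.
  by rewrite adde0.
have Lfin : forall i, (mu (L i) < +oo)%E.
  by move=> i; apply: (le_lt_trans (@msub_le d T R mu _ _ (mL i) hOm (LO i))).
have LPf : forall i, (P (L i) < +oo)%E by move=> i; exact: (le_lt_trans (PLc i) (ltry _)).
have Ldisj : forall i j, i != j -> mu (L i `&` L j) = 0%E.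
  move=> i j ij; apply: small0; first exact: mu_ge0.
  move=> dl dl0; have dl20 : 0 < dl / 2 by lra.
  have [k [[_ hi] [_ hj]]] := filter_ex (filterI (nearL i _ dl20) (nearL j _ dl20)).
  have Cij : mu (C (phi k) i `&` C (phi k) j) = 0%E by case: (cC (phi k)) => [[_ +] _]; apply.
  set Ai := C (phi k) i in hi Cij *; set Aj := C (phi k) j in hj Cij *.
  have mAi : measurable Ai by exact: Cm.
  have mAj : measurable Aj by exact: Cm.
  have m1 : measurable (L i `\` Ai) by exact: measurableD.
  have m2 : measurable (L j `\` Aj) by exact: measurableD.
  have m3 : measurable (Ai `&` Aj) by exact: measurableI.
  apply: (le_lt_trans (y := mu ((L i `\` Ai) `|` ((L j `\` Aj) `|` (Ai `&` Aj))))).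
    apply: mu_sub; [exact: measurableI | by apply: measurableU => //; apply: measurableU |].
    move=> x [Lix Ljx]; case: (pselect (Ai x)) => Aix; last by left.
    by case: (pselect (Aj x)) => Ajx; right; [right | left].
  apply: le_lt_trans; first by apply: mu_U2 => //; apply: measurableU.
  apply: le_lt_trans; first by apply: leeD2l; apply: mu_U2.
  rewrite Cij adde0 (_ : dl = dl / 2 + dl / 2); last by field.
  by rewrite EFinD; apply: lteD.
have cL : cluster_in mu P Omega L.
  split; last exact: LO.
  split; last exact: Ldisj.
  by move=> i; split.
have rL : cheeger_ratio mu P L <= hr.
  apply/ler_addgt0Pr => eps eps0.
  pose Pi i := fine (P (L i)); pose mi i := fine (mu (L i)).
  have mi0 : forall i, 0 < mi i by move=> i; apply: fine_gt0; rewrite Lpos Lfin.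
  have Pi0 : forall i, 0 <= Pi i by move=> i; apply: fine_ge0; apply: P0.
  pose K := \sum_(i < N) (Pi i + mi i) / mi i ^+ 2.
  have K0 : 0 <= K.
    apply: sumr_ge0 => i _; apply: divr_ge0; last by rewrite exprn_ge0 // ltW.
    by apply: addr_ge0 => //; apply: ltW.
  pose eh := eps / 2.
  have eh0 : 0 < eh by rewrite /eh; lra.
  pose dl := eh / (K + 1).
  have dl0 : 0 < dl by apply: divr_gt0 => //; lra.
  have dlK : dl * K <= eh.
    rewrite /dl mulrAC ler_pdivrMr; last by lra.
    nra.
  have nearP : forall i, \forall k \near \oo, Pi i - dl <= fine (P (C (phi k) i)).
    move=> i; case: (hL i) => _ _ cv.
    have := hP4 _ _ (fun k => Cm (phi k) i) (mL i) cv.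
    have : ((Pi i - dl)%:E < P (L i))%E by rewrite [X in (_ < X)%E]finP // lte_fin /Pi; lra.
    move=> lt1 le1; have [n hn] := @lt_limn_einf R _ _ (lt_le_trans lt1 le1).
    exists n => // k /= nk; have := hn k nk.
    by rewrite (finP _ (Cm _ _) (CPf _ _)) lte_fin => /ltW.
  have nearM : forall i, \forall k \near \oo, fine (mu (C (phi k) i)) <= mi i + dl.
    move=> i; apply: filterS (nearL i dl dl0) => k [h1 _].
    have : (mu (C (phi k) i) <= (dl + mi i)%:E)%E.
      rewrite (@mu_DI d T R mu _ _ (Cm _ _) (mL i)) EFinD.
      apply: leeD; first exact: ltW.
      rewrite /mi -finM //.
      by apply: mu_sub; [exact: measurableI | exact: mL | move=> x []].
    by rewrite (finM _ (Cm _ _) (Cmuf _ _)) lee_fin addrC.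
  have nearI : \forall k \near \oo, (k.+1%:R)^-1 < eh.
    exact: (@near_infty_natSinv_lt R (PosNum eh0)).
  have [k [[hP' hM'] hI]] := filter_ex (filterI (filterI (filter_forall _ nearP) (filter_forall _ nearM)) nearI).
  have r1 : cheeger_ratio mu P (C (phi k)) < hr + eh.
    apply: (lt_le_trans (proj2 (hC (phi k)))); rewrite lerD2l.
    apply: (le_trans _ (ltW hI)).
    by rewrite lef_pV2 ?posrE ?ltr0n // ler_nat ltnS phige.
  have r2 : \sum_(i < N) (Pi i / mi i - dl * ((Pi i + mi i) / mi i ^+ 2)) <=
      cheeger_ratio mu P (C (phi k)).
    rewrite /cheeger_ratio; apply: ler_sum => i _; apply: term_le => //.
  move: r2; rewrite sumrB -mulr_sumr -/K => r2.
  have -> : cheeger_ratio mu P L = \sum_(i < N) Pi i / mi i by [].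
  rewrite /eh in r1 dlK; lra.
exists L; split => //.
have -> : cheeger_constant mu P N Omega = hr%:E by rewrite -hE.
congr (_%:E); apply: le_anti; rewrite rL /=; exact: hinf.
Qed.
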